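(* Let $\mathbf z=(z_1,\dots,z_n)\in\bar\Sigma^n$, $\mathbf y=(y_1,\dots,y_n)\in\Sigma^n$ and $\mathbf r=(r_1,\dots,r_n)\in\{0,1\}^n$, and let $\mathbf z'$ be the result of the Rewrite-MDM transition, $z'_i=y_i$ if $r_i=1$ and $z'_i=z_i$ if $r_i=0$. Then there is a sequence of three AP-MDM steps $\mathbf z\to\mathbf u^{(1)}\to\mathbf u^{(2)}\to\mathbf u^{(3)}$ with $\mathbf u^{(3)}=\mathbf z'$; i.e., there exist token vectors $\mathbf y^{(j)}$ and control vectors $\mathbf c^{(j)}$ ($j=1,2,3$) of the appropriate lengths such that $\mathbf u^{(1)}=g(\mathbf z,\mathbf y^{(1)},\mathbf c^{(1)})$, $\mathbf u^{(2)}=g(\mathbf u^{(1)},\mathbf y^{(2)},\mathbf c^{(2)})$, $\mathbf u^{(3)}=g(\mathbf u^{(2)},\mathbf y^{(3)},\mathbf c^{(3)})=\mathbf z'$.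
   Context: Vocabulary $\Sigma$ with mask token $\mathsf M$, $\bar\Sigma=\Sigma\cup\{\mathsf M\}$. One AP-MDM step: given the current sequence $\mathbf x\in\bar\Sigma^m$, a mask-free token vector $\mathbf y\in\Sigma^m$ and control vector $\mathbf c\in(\{0,1\}^3)^m$, the next sequence is $g(\mathbf x,\mathbf y,\mathbf c)=(s_1,\dots,s_m)$ (concatenation of strings), where $s_i=\mathrm{insert}\circ\mathrm{delete}\circ\mathrm{remask}(y_i)$ with $\mathrm{remask}(y)=\mathsf M$ if $c_i[1]=1$, $=y$ if $x_i=\mathsf M$ and $c_i[1]=0$, $=x_i$ otherwise; $\mathrm{delete}(y)=\varepsilon$ (empty string) if $x_i=\mathsf M$ and $c_i[3]=1$, else $y$; $\mathrm{insert}(y)=(y,\mathsf M)$ if $c_i[2]=1$, else $y$. A Rewrite-MDM step, with binary rewrite signals $r_i$, replaces $z_i$ by $y_i$ when $r_i=1$ and keeps $z_i$ when $r_i=0$. *)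

(* Defs.v *)
From Stdlib Require Import List.
Import ListNotations.

(* Barred vocabulary: [None] is the mask token M, [Some a] is a token a of Sigma. *)
Definition bar (Sigma : Type) := option Sigma.
Definition Mask {Sigma : Type} : bar Sigma := None.

(* Control bits (c[1], c[2], c[3]) = (remask, insert, delete). *)
Record ctrl := Ctrl { c1 : bool; c2 : bool; c3 : bool }.

Definition ap_pos {Sigma : Type} (x : bar Sigma) (y : Sigma) (c : ctrl)
  : list (bar Sigma) :=
  let rm : bar Sigma :=
      if c1 c then Mask
      else match x with None => Some y | Some _ => x end in
  let dl : list (bar Sigma) :=
      match x with
      | None => if c3 c then [] else [rm]
      | Some _ => [rm]
      end in
  if c2 c then dl ++ [Mask] else dl.

(* One AP-MDM step g(x, y, c): concatenation of the s_i.  Used only when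
   x, y, c all have the same length m. *)
Fixpoint ap_step {Sigma : Type} (x : list (bar Sigma)) (y : list Sigma)
  (c : list ctrl) : list (bar Sigma) :=
  match x, y, c with
  | xi :: x', yi :: y', ci :: c' => ap_pos xi yi ci ++ ap_step x' y' c'
  | _, _, _ => []
  end.

Definition ap_transition {Sigma : Type} (x u : list (bar Sigma)) : Prop :=
  exists (y : list Sigma) (c : list ctrl),
    length y = length x /\ length c = length x /\ u = ap_step x y c.

Fixpoint rewrite_step {Sigma : Type} (z : list (bar Sigma)) (y : list Sigma)
  (r : list bool) : list (bar Sigma) :=
  match z, y, r with
  | zi :: z', yi :: y', ri :: r' =>
      (if ri then Some yi else zi) :: rewrite_step z' y' r'
  | _, _, _ => []
  end.

(* Main.v *)
Require Import Defs.
From Stdlib Require Import List Lia.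
Import ListNotations.

Definition keep_c {S : Type} (x : bar S) : ctrl :=
  Ctrl (match x with None => true | Some _ => false end) false false.

Lemma id_step {S : Type} : forall (x : list (bar S)) (ys : list S),
  length ys = length x -> ap_step x ys (map keep_c x) = x.
Proof.
  induction x as [|a x IH]; intros [|b ys] H; simpl in *; try discriminate; auto.
  rewrite IH by lia. destruct a; reflexivity.
Qed.

Fixpoint c1l {S : Type} (z : list (bar S)) (r : list bool) : list ctrl :=
  match z, r with
  | zi :: z', ri :: r' =>
    Ctrl (if ri then match zi with Some _ => true | None => false end
          else match zi with None => true | Some _ => false end) false false
      :: c1l z' r'
  | _, _ => []
  end.

Fixpoint u1f {S : Type} (z : list (bar S)) (y : list S) (r : list bool) : list (bar S) :=
  match z, y, r with
  | zi :: z', yi :: y', ri :: r' =>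
    (if ri then match zi with Some _ => None | None => Some yi end else zi)
      :: u1f z' y' r'
  | _, _, _ => []
  end.

Fixpoint c2l {S : Type} (u : list (bar S)) (r : list bool) : list ctrl :=
  match u, r with
  | ui :: u', ri :: r' =>
    Ctrl (match ui with None => negb ri | Some _ => false end) false false
      :: c2l u' r'
  | _, _ => []
  end.

Lemma step1 {S : Type} : forall (z : list (bar S)) y r,
  ap_step z y (c1l z r) = u1f z y r.
Proof.
  induction z as [|a z IH]; intros [|b y] [|c r]; simpl; auto.
  rewrite IH. destruct a, c; reflexivity.
Qed.

Lemma step2 {S : Type} : forall (z : list (bar S)) y r,
  ap_step (u1f z y r) y (c2l (u1f z y r) r) = rewrite_step z y r.
Proof.
  induction z as [|a z IH]; intros [|b y] [|c r]; simpl; auto.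
  rewrite IH. destruct a, c; reflexivity.
Qed.

Lemma len_c1l {S : Type} : forall (z : list (bar S)) r,
  length r = length z -> length (c1l z r) = length z.
Proof. induction z; intros [|c r] H; simpl in *; try discriminate; auto. Qed.

Lemma len_c2l {S : Type} : forall (z : list (bar S)) r,
  length r = length z -> length (c2l z r) = length z.
Proof. induction z; intros [|c r] H; simpl in *; try discriminate; auto. Qed.

Lemma len_u1f {S : Type} : forall (z : list (bar S)) y r,
  length y = length z -> length r = length z -> length (u1f z y r) = length z.
Proof. induction z; intros [|b y] [|c r] H1 H2; simpl in *; try discriminate; auto. Qed.

Lemma len_rw {S : Type} : forall (z : list (bar S)) y r,
  length y = length z -> length r = length z -> length (rewrite_step z y r) = length z.
Proof. induction z; intros [|b y] [|c r] H1 H2; simpl in *; try discriminate; auto. Qed.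

Theorem mainTheorem5 (Sigma : Type) (n : nat) (z : list (bar Sigma))
  (y : list Sigma) (r : list bool) :
  length z = n -> length y = n -> length r = n ->
  exists u1 u2 u3 : list (bar Sigma),
    ap_transition z u1 /\ ap_transition u1 u2 /\ ap_transition u2 u3 /\
    u3 = rewrite_step z y r.
Proof.
  intros Hz Hy Hr.
  assert (Hy' : length y = length z) by lia.
  assert (Hr' : length r = length z) by lia.
  exists (u1f z y r), (rewrite_step z y r), (rewrite_step z y r).
  pose proof (len_u1f z y r Hy' Hr') as L1.
  pose proof (len_rw z y r Hy' Hr') as L2.
  repeat split.
  - exists y, (c1l z r). repeat split; auto using len_c1l. symmetry; apply step1.
  - exists y, (c2l (u1f z y r) r). repeat split; try lia.
    + apply len_c2l; lia.
    + symmetry; apply step2.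
  - exists y, (map keep_c (rewrite_step z y r)). repeat split; try lia.
    + rewrite length_map; reflexivity.
    + symmetry; apply id_step; lia.
Qed.
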